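(* In the setting described in the context, if $s>m^{2^r}$, then $\mathrm{IN}_s(X)\setminus\triangle^{(s)}(X)=\emptyset$.
   Context: Let $r\geq 2$, $G=\mathbb Z^r$ with standard basis $e_1,\dots,e_r$. For each $j$, let $(p_j^i)_{i}$ be strictly increasing positive integers with $p_j^i\mid p_j^{i+1}$, $p_j^i>2i+1$, and $\Gamma_i=\langle p_j^ie_j:1\le j\le r\rangle$, with $[\Gamma_i:\Gamma_{i+1}]>1/(1-2^{-(1/2)^{i+1}})$. Let $D_i\subseteq\mathbb Z^r$ be fundamental domains of $\mathbb Z^r/\Gamma_i$ of the form $\{x: -q^i_{1,j}\le x_j<q^i_{2,j}\}$ with $q^i_{1,j},q^i_{2,j}>i$, $q^i_{1,j}+q^i_{2,j}=p^i_j$, $0\in D_i\subseteq D_{i+1}$, $\bigcup_iD_i=\mathbb Z^r$, $D_i=\bigcup_{\gamma\in D_i\cap\Gamma_{i-1}}(\gamma+D_{i-1})$ for $i\ge2$. Let $m\ge2$, $\Sigma=\{1,\dots,m\}$, $\alpha_i\in\Sigma$ with $\alpha_i\equiv i\pmod m$. Define $\eta\in\Sigma^{\mathbb Z^r}$ by $J(0)=\{0\}$, $\eta=\alpha_1$ on $\Gamma_1$, and for $k\ge1$, $J(k)=D_k\setminus\bigcup_{i=0}^{k-1}(J(i)+\Gamma_{i+1})$, $\eta(\gamma+h)=\alpha_{k+1}$ for $h\in J(k),\gamma\in\Gamma_{k+1}$. $X$ is the closure of the shift orbit of $\eta$ (shift $\sigma^g(x)(h)=x(h-g)$). $\mathrm{IN}_s(X)$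 is the set of $(x_1,\dots,x_s)\in X^s$ such that for every product neighborhood $U_1\times\dots\times U_s$, $(U_1,\dots,U_s)$ has arbitrarily large finite independence sets, where $J\subseteq\mathbb Z^r$ is an independence set if $\bigcap_{g\in I}\sigma^{-g}U_{t(g)}\ne\emptyset$ for all nonempty finite $I\subseteq J$ and $t:I\to\{1,\dots,s\}$. $\triangle^{(s)}(X)=\{(x_1,\dots,x_s): x_i=x_j\text{ for some } i\ne j\}$. *)

(* Defs.v *)
From Stdlib Require Import ZArith Reals List.
From mathcomp Require Import all_boot.

Set Implicit Arguments.
Unset Strict Implicit.
Unset Printing Implicit Defensive.

Definition pt (r : nat) := 'I_r -> Z.

Definition padd r (x y : pt r) : pt r := fun j => (x j + y j)%Z.
Definition psub r (x y : pt r) : pt r := fun j => (x j - y j)%Z.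
Definition pzero r : pt r := fun _ => 0%Z.

(* Gamma_i = < p_j^i e_j : 1 <= j <= r >  (p j i stands for p_j^i) *)
Definition inGamma r (p : 'I_r -> nat -> nat) (i : nat) (x : pt r) : Prop :=
  forall j, (Z.of_nat (p j i) | x j)%Z.

Definition inD r (q1 q2 : nat -> 'I_r -> nat) (i : nat) (x : pt r) : Prop :=
  forall j, (- Z.of_nat (q1 i j) <= x j < Z.of_nat (q2 i j))%Z.

(* Index [Gamma_i : Gamma_{i+1}] of the lattice Gamma_{i+1} in Gamma_i
   (= prod_j p_j^{i+1} / p_j^i, the divisions being exact) *)
Definition lattice_index r (p : 'I_r -> nat -> nat) (i : nat) : nat :=
  \prod_(j < r) (p j i.+1 %/ p j i).

(* The sets J(k):
     J(0) = {0},
     J(k) = D_k \ U_k  for k >= 1,  where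
     U_k  = \bigcup_{i=0}^{k-1} (J(i) + Gamma_{i+1}). *)
Definition Jgen r (q1 q2 : nat -> 'I_r -> nat) (k : nat) (U : pt r -> Prop)
  (h : pt r) : Prop :=
  match k with
  | 0 => h = @pzero r
  | _ => inD q1 q2 k h /\ ~ U h
  end.

Fixpoint Ucov r (p : 'I_r -> nat -> nat) (q1 q2 : nat -> 'I_r -> nat) (k : nat)
  (x : pt r) : Prop :=
  match k with
  | 0 => False
  | S k' => Ucov p q1 q2 k' x \/
            exists h g, Jgen q1 q2 k' (Ucov p q1 q2 k') h /\
                        inGamma p (k'.+1) g /\ x = padd h g
  end.

Definition Jset r (p : 'I_r -> nat -> nat) (q1 q2 : nat -> 'I_r -> nat) (k : nat)
  (h : pt r) : Prop := Jgen q1 q2 k (Ucov p q1 q2 k) h.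

(* Configurations: elements of Sigma^{Z^r}, Sigma = {1,...,m} viewed inside nat *)
Definition config (r : nat) := pt r -> nat.

Definition shift r (g : pt r) (x : config r) : config r := fun h => x (psub h g).

(* X = closure of the shift orbit of eta in the product topology (discrete
   alphabet): every cylinder neighbourhood of x meets the orbit of eta. *)
Definition inX r (eta : config r) (x : config r) : Prop :=
  forall F : list (pt r), exists g : pt r,
    forall h, In h F -> x h = shift g eta h.

(* U is a neighbourhood of x in X: it contains all points of X lying in some
   cylinder neighbourhood {y | y = x on F} (F finite) of x. *)
Definition nbhdX r (eta : config r) (x : config r) (U : config r -> Prop) : Prop :=
  exists F : list (pt r), forall y, inX eta y ->
    (forall h, In h F -> y h = x h) -> U y.

Definition indep_set r (eta : config r) (s : nat) (U : 'I_s -> config r -> Prop)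
  (Jl : list (pt r)) : Prop :=
  forall (I : list (pt r)) (t : pt r -> 'I_s),
    I <> nil -> (forall g, In g I -> In g Jl) ->
    exists x, inX eta x /\ forall g, In g I -> U (t g) (shift g x).

Definition IN r (eta : config r) (s : nat) (xs : 'I_s -> config r) : Prop :=
  (forall i, inX eta (xs i)) /\
  forall U : 'I_s -> config r -> Prop,
    (forall i, nbhdX eta (xs i) (U i)) ->
    forall n : nat, exists Jl : list (pt r),
      NoDup Jl /\ n <= length Jl /\ indep_set eta U Jl.

Definition fat_diag r (s : nat) (xs : 'I_s -> config r) : Prop :=
  exists i j : 'I_s, i <> j /\ xs i = xs j.

(* Main.v *)
Require Import Defs.
From Stdlib Require Import ZArith Reals List.
From mathcomp Require Import all_boot.
From Stdlib Require Import Lia FunctionalExtensionality Classical ClassicalEpsilon.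
From mathcomp Require Import zify.
Set Implicit Arguments.
Unset Strict Implicit.

Lemma dvd_chain r (p : 'I_r -> nat -> nat)
  (hp_dvd : forall j i, 1 <= i -> p j i %| p j i.+1) j i k :
  1 <= i -> i <= k -> p j i %| p j k.
Proof.
move=> hi; elim: k => [|k IH]; first by rewrite leqn0 => /eqP ->.
rewrite leq_eqVlt => /orP [/eqP -> //| hik].
apply: dvdn_trans (IH hik) (hp_dvd _ _ _); lia.
Qed.

Lemma gamma_mono r (p : 'I_r -> nat -> nat)
  (hp_dvd : forall j i, 1 <= i -> p j i %| p j i.+1) i k x :
  1 <= i -> i <= k -> inGamma p k x -> inGamma p i x.
Proof.
move=> hi hik hx j.
have /dvdnP [c hc] := dvd_chain hp_dvd j hi hik.
apply: Z.divide_trans (hx j).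
exists (Z.of_nat c); rewrite hc Nat2Z.inj_mul //.
Qed.

Lemma gamma_add r (p : 'I_r -> nat -> nat) i x y :
  inGamma p i x -> inGamma p i y -> inGamma p i (padd x y).
Proof. move=> hx hy j; apply: Z.divide_add_r; [exact: hx|exact: hy]. Qed.

Lemma gamma_sub r (p : 'I_r -> nat -> nat) i x y :
  inGamma p i x -> inGamma p i y -> inGamma p i (psub x y).
Proof. move=> hx hy j; apply: Z.divide_sub_r; [exact: hx|exact: hy]. Qed.

Lemma gamma_ext r (p : 'I_r -> nat -> nat) i x y :
  (forall j, x j = y j) -> inGamma p i x -> inGamma p i y.
Proof. by move=> e hx j; rewrite -e. Qed.

Lemma inD_ext r (q1 q2 : nat -> 'I_r -> nat) i x y :
  (forall j, x j = y j) -> inD q1 q2 i x -> inD q1 q2 i y.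
Proof. by move=> e hx j; rewrite -e. Qed.

Lemma pt_ext r (x y : pt r) : (forall j, x j = y j) -> x = y.
Proof. move=> e; exact: functional_extensionality. Qed.

Definition Aset r (p : 'I_r -> nat -> nat) (q1 q2 : nat -> 'I_r -> nat) k (x : pt r) :=
  exists h g, Jset p q1 q2 k h /\ inGamma p k.+1 g /\ x = padd h g.

Lemma Ucov_ex r (p : 'I_r -> nat -> nat) q1 q2 k x :
  Ucov p q1 q2 k x <-> exists i, i < k /\ Aset p q1 q2 i x.
Proof.
elim: k x => [|k IH] x /=; first by split => // [[i []]].
split.
- case=> [/IH [i [hi hA]]|hA]; first by exists i; split => //; lia.
  by exists k; split.
- move=> [i [hi hA]]; case: (ltnP i k) => hik.
  + by left; apply/IH; exists i.
  + have e : i = k by lia.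
    subst i.
    by right.
Qed.

Lemma A_shift r (p : 'I_r -> nat -> nat) q1 q2 k x w :
  Aset p q1 q2 k x -> inGamma p k.+1 w -> Aset p q1 q2 k (padd x w).
Proof.
move=> [h [g [hJ [hg ->]]]] hw; exists h, (padd g w); split => //; split.
  exact: gamma_add.
apply: pt_ext => j; rewrite /padd; lia.
Qed.

Lemma Ucov_shift r (p : 'I_r -> nat -> nat)
  (hp_dvd : forall j i, 1 <= i -> p j i %| p j i.+1) q1 q2 k x w :
  inGamma p k w -> Ucov p q1 q2 k x -> Ucov p q1 q2 k (padd x w).
Proof.
move=> hw /Ucov_ex [i [hi hA]]; apply/Ucov_ex; exists i; split => //.
apply: A_shift => //; apply: gamma_mono hw => //; lia.
Qed.

Lemma Ucov_unshift r (p : 'I_r -> nat -> nat)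
  (hp_dvd : forall j i, 1 <= i -> p j i %| p j i.+1) q1 q2 k x w :
  inGamma p k w -> Ucov p q1 q2 k (padd x w) -> Ucov p q1 q2 k x.
Proof.
move=> hw h.
have hw' : inGamma p k (psub (@pzero r) w) by apply: gamma_sub => // j; exists 0%Z.
have := Ucov_shift hp_dvd hw' h.
have -> // : padd (padd x w) (psub (@pzero r) w) = x.
apply: pt_ext => j; rewrite /padd /psub /pzero; lia.
Qed.

Lemma eta_A r (p : 'I_r -> nat -> nat) q1 q2 (alpha : nat -> nat) (eta : config r)
  (heta : forall k (h g : pt r), Jset p q1 q2 k h -> inGamma p k.+1 g ->
            eta (padd g h) = alpha k.+1) k x :
  Aset p q1 q2 k x -> eta x = alpha k.+1.
Proof.
move=> [h [g [hJ [hg ->]]]]; rewrite -(heta _ _ _ hJ hg); congr eta.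
apply: pt_ext => j; rewrite /padd; lia.
Qed.

Lemma covered r (p : 'I_r -> nat -> nat) q1 q2
  (hDcover : forall x : pt r, exists i, 1 <= i /\ inD q1 q2 i x) x :
  exists k, Aset p q1 q2 k x.
Proof.
have [i [hi hx]] := hDcover x.
case: (classic (Ucov p q1 q2 i x)) => [/Ucov_ex [k [_ hk]]|hn]; first by exists k.
exists i; exists x, (@pzero r); split; last split.
- by case: i hi hx hn => // i _ hx hn; split.
- by move=> j; exists 0%Z.
- apply: pt_ext => j; rewrite /padd /pzero; lia.
Qed.

Lemma tiling r (p : 'I_r -> nat -> nat)
  (hp_dvd : forall j i, 1 <= i -> p j i %| p j i.+1)
  (q1 q2 : nat -> 'I_r -> nat)
  (hDfund : forall i, 1 <= i -> forall x : pt r,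
     exists y, inD q1 q2 i y /\ inGamma p i (psub x y) /\
       forall y', inD q1 q2 i y' -> inGamma p i (psub x y') -> y' = y)
  (hDrec : forall i, 2 <= i -> forall x : pt r,
     inD q1 q2 i x <->
     exists g y, inD q1 q2 i g /\ inGamma p i.-1 g /\ inD q1 q2 i.-1 y /\
                 x = padd g y)
  K k : 1 <= K -> K <= k -> forall gam y1 y2, inGamma p K gam ->
  inD q1 q2 K y1 -> inD q1 q2 K y2 -> inD q1 q2 k (padd y1 gam) ->
  inD q1 q2 k (padd y2 gam).
Proof.
move=> hK; elim: k => [|k IH] hk gam y1 y2 hg h1 h2 hx; first lia.
case: (ltnP k K) => hkK.
- have e : k.+1 = K by lia.
  rewrite e in hx *.
  have [y [_ [_ hu]]] := hDfund K hK (padd y1 gam).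
  have e1 : y1 = y.
    apply: hu h1 _; apply: gamma_ext hg => j; rewrite /psub /padd; lia.
  have e2 : padd y1 gam = y.
    apply: hu => //; apply: (gamma_ext (x := @pzero r)); last by move=> j; exists 0%Z.
    move=> j; rewrite /psub /pzero; lia.
  apply: inD_ext h2 => j.
  have := congr1 (fun f => f j) (etrans e1 (esym e2)); rewrite /padd; lia.
- have [g [y [hgD [hgG [hy e]]]]] := (proj1 (hDrec k.+1 ltac:(lia) _)) hx.
  simpl in hgG, hy.
  have hg' : inGamma p K (psub gam g).
    apply: gamma_sub => //; apply: gamma_mono hgG => //.
  have := IH hkK (psub gam g) y1 y2 hg' h1 h2.
  have hy' : inD q1 q2 k (padd y1 (psub gam g)).
    apply: inD_ext hy => j; have := congr1 (fun f => f j) e; rewrite /padd /psub; lia.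
  move=> /(_ hy') hy2.
  apply/(hDrec k.+1 ltac:(lia)); exists g, (padd y2 (psub gam g)); do 3!(split => //).
  apply: pt_ext => j; rewrite /padd /psub; lia.
Qed.

Lemma Jset_hole r (p : 'I_r -> nat -> nat) q1 q2 K y :
  1 <= K -> Jset p q1 q2 K y -> inD q1 q2 K y /\ ~ Ucov p q1 q2 K y.
Proof. by case: K. Qed.

Lemma hole_Jset r (p : 'I_r -> nat -> nat) q1 q2 K y :
  1 <= K -> inD q1 q2 K y -> ~ Ucov p q1 q2 K y -> Jset p q1 q2 K y.
Proof. by case: K. Qed.

Lemma hole_step r (p : 'I_r -> nat -> nat)
  (hp_dvd : forall j i, 1 <= i -> p j i %| p j i.+1)
  (q1 q2 : nat -> 'I_r -> nat)
  (hDfund : forall i, 1 <= i -> forall x : pt r,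
     exists y, inD q1 q2 i y /\ inGamma p i (psub x y) /\
       forall y', inD q1 q2 i y' -> inGamma p i (psub x y') -> y' = y)
  (hDrec : forall i, 2 <= i -> forall x : pt r,
     inD q1 q2 i x <->
     exists g y, inD q1 q2 i g /\ inGamma p i.-1 g /\ inD q1 q2 i.-1 y /\
                 x = padd g y)
  K k y1 y2 w : 1 <= K -> Jset p q1 q2 K y1 -> Jset p q1 q2 K y2 -> inGamma p K w ->
  (Ucov p q1 q2 k (padd y1 w) <-> Ucov p q1 q2 k (padd y2 w)) ->
  Aset p q1 q2 k (padd y1 w) -> Aset p q1 q2 k (padd y2 w).
Proof.
move=> hK hJ1 hJ2 hw heq hA.
have [hD1 hU1] := Jset_hole hK hJ1.
have [hD2 hU2] := Jset_hole hK hJ2.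
case: (ltnP k K) => hkK.
  exfalso; apply: hU1; apply: (Ucov_unshift hp_dvd hw).
  by apply/Ucov_ex; exists k.
have hk : 1 <= k by lia.
move: hA => [h [g [hJ [hg e]]]].
have [hDh hUh] := Jset_hole hk hJ.
have hgk : inGamma p k g by apply: gamma_mono hg => //.
have hgK : inGamma p K g by apply: gamma_mono hg => //; lia.
have hgam : inGamma p K (psub w g) by apply: gamma_sub.
have hD' : inD q1 q2 k (padd y2 (psub w g)).
  apply: (tiling hp_dvd hDfund hDrec hK hkK hgam hD1 hD2).
  apply: inD_ext hDh => j; have := congr1 (fun f => f j) e; rewrite /padd /psub; lia.
exists (padd y2 (psub w g)), g; split; last split => //.
  apply: hole_Jset => // hU.
  apply: hUh; apply: (Ucov_unshift hp_dvd hgk).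
  rewrite -e; apply/heq.
  have := Ucov_shift hp_dvd hgk hU.
  have -> // : padd (padd y2 (psub w g)) g = padd y2 w.
  apply: pt_ext => j; rewrite /padd /psub; lia.
apply: pt_ext => j; rewrite /padd /psub; lia.
Qed.

Lemma hole_equiv r (p : 'I_r -> nat -> nat)
  (hp_dvd : forall j i, 1 <= i -> p j i %| p j i.+1)
  (q1 q2 : nat -> 'I_r -> nat)
  (hDfund : forall i, 1 <= i -> forall x : pt r,
     exists y, inD q1 q2 i y /\ inGamma p i (psub x y) /\
       forall y', inD q1 q2 i y' -> inGamma p i (psub x y') -> y' = y)
  (hDrec : forall i, 2 <= i -> forall x : pt r,
     inD q1 q2 i x <->
     exists g y, inD q1 q2 i g /\ inGamma p i.-1 g /\ inD q1 q2 i.-1 y /\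
                 x = padd g y)
  K y1 y2 w : 1 <= K -> Jset p q1 q2 K y1 -> Jset p q1 q2 K y2 -> inGamma p K w ->
  forall k, (Ucov p q1 q2 k (padd y1 w) <-> Ucov p q1 q2 k (padd y2 w)).
Proof.
move=> hK hJ1 hJ2 hw; elim => [|k IH] //=.
split => [[H|H]|[H|H]].
- by left; apply/IH.
- by right; exact: (hole_step hp_dvd hDfund hDrec hK hJ1 hJ2 hw IH H).
- by left; apply/IH.
- right; apply: (hole_step hp_dvd hDfund hDrec hK hJ2 hJ1 hw _ H).
  by split => /IH.
Qed.

Lemma hole_eta r (p : 'I_r -> nat -> nat)
  (hp_dvd : forall j i, 1 <= i -> p j i %| p j i.+1)
  (q1 q2 : nat -> 'I_r -> nat)
  (hDfund : forall i, 1 <= i -> forall x : pt r,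
     exists y, inD q1 q2 i y /\ inGamma p i (psub x y) /\
       forall y', inD q1 q2 i y' -> inGamma p i (psub x y') -> y' = y)
  (hDcover : forall x : pt r, exists i, 1 <= i /\ inD q1 q2 i x)
  (hDrec : forall i, 2 <= i -> forall x : pt r,
     inD q1 q2 i x <->
     exists g y, inD q1 q2 i g /\ inGamma p i.-1 g /\ inD q1 q2 i.-1 y /\
                 x = padd g y)
  (alpha : nat -> nat) (eta : config r)
  (heta : forall k (h g : pt r), Jset p q1 q2 k h -> inGamma p k.+1 g ->
            eta (padd g h) = alpha k.+1)
  K y1 y2 w : 1 <= K -> Jset p q1 q2 K y1 -> Jset p q1 q2 K y2 -> inGamma p K w ->
  eta (padd y1 w) = eta (padd y2 w).
Proof.
move=> hK hJ1 hJ2 hw.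
have [k hA] := covered p hDcover (padd y1 w).
have hA2 := hole_step hp_dvd hDfund hDrec hK hJ1 hJ2 hw
   (hole_equiv hp_dvd hDfund hDrec hK hJ1 hJ2 hw k) hA.
by rewrite (eta_A heta hA) (eta_A heta hA2).
Qed.

Lemma nonhole_eta r (p : 'I_r -> nat -> nat)
  (hp_dvd : forall j i, 1 <= i -> p j i %| p j i.+1)
  (q1 q2 : nat -> 'I_r -> nat)
  (alpha : nat -> nat) (eta : config r)
  (heta : forall k (h g : pt r), Jset p q1 q2 k h -> inGamma p k.+1 g ->
            eta (padd g h) = alpha k.+1)
  K y w : Ucov p q1 q2 K y -> inGamma p K w -> eta (padd y w) = eta y.
Proof.
move=> /Ucov_ex [i [hi hA]] hw.
have hA2 : Aset p q1 q2 i (padd y w).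
  apply: A_shift => //; apply: gamma_mono hw => //.
by rewrite (eta_A heta hA) (eta_A heta hA2).
Qed.

Lemma eta_range r (p : 'I_r -> nat -> nat) q1 q2
  (hDcover : forall x : pt r, exists i, 1 <= i /\ inD q1 q2 i x)
  (m : nat) (alpha : nat -> nat)
  (halpha : forall i, 1 <= i -> 1 <= alpha i <= m /\ alpha i = i %[mod m])
  (eta : config r)
  (heta : forall k (h g : pt r), Jset p q1 q2 k h -> inGamma p k.+1 g ->
            eta (padd g h) = alpha k.+1) x :
  1 <= eta x <= m.
Proof.
have [k hA] := covered p hDcover x.
by rewrite (eta_A heta hA); case: (halpha k.+1 erefl).
Qed.

Lemma key r (p : 'I_r -> nat -> nat)
  (hp_dvd : forall j i, 1 <= i -> p j i %| p j i.+1)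
  (q1 q2 : nat -> 'I_r -> nat)
  (hq1 : forall i j, 1 <= i -> i < q1 i j)
  (hq2 : forall i j, 1 <= i -> i < q2 i j)
  (hqsum : forall i j, 1 <= i -> q1 i j + q2 i j = p j i)
  (hDfund : forall i, 1 <= i -> forall x : pt r,
     exists y, inD q1 q2 i y /\ inGamma p i (psub x y) /\
       forall y', inD q1 q2 i y' -> inGamma p i (psub x y') -> y' = y)
  (hDcover : forall x : pt r, exists i, 1 <= i /\ inD q1 q2 i x)
  (hDrec : forall i, 2 <= i -> forall x : pt r,
     inD q1 q2 i x <->
     exists g y, inD q1 q2 i g /\ inGamma p i.-1 g /\ inD q1 q2 i.-1 y /\
                 x = padd g y)
  (m : nat) (hm : 1 <= m)
  (alpha : nat -> nat)
  (halpha : forall i, 1 <= i -> 1 <= alpha i <= m /\ alpha i = i %[mod m])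
  (eta : config r)
  (heta : forall k (h g : pt r), Jset p q1 q2 k h -> inGamma p k.+1 g ->
            eta (padd g h) = alpha k.+1)
  K (hK : 1 <= K) (F : list (pt r))
  (hF : forall h, List.In h F -> forall j, (- Z.of_nat K < h j < Z.of_nat K)%Z)
  s (zs : 'I_s -> pt r) z0 (hz : forall i, inGamma p K (psub (zs i) z0))
  (hdist : forall i i', i <> i' -> exists h, List.In h F /\
       eta (padd h (zs i)) <> eta (padd h (zs i'))) :
  s <= m ^ (2 ^ r).
Proof.
case: m hm halpha => [//|m'] _ halpha.
have [rho [hrD [hrG _]]] := hDfund K hK z0.
pose w i := psub (zs i) rho.
have hw : forall i, inGamma p K (w i).
  move=> i; apply: (gamma_ext (x := padd (psub (zs i) z0) (psub z0 rho))).
    by move=> j; rewrite /w /padd /psub; lia.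
  exact: gamma_add.
pose y0 := epsilon (inhabits (@pzero r)) (fun y => Jset p q1 q2 K y).
pose eb (b : {ffun 'I_r -> bool}) : pt r := fun j =>
  if b j then (if (0 <=? rho j)%Z then Z.of_nat (p j K) else (- Z.of_nat (p j K))%Z)
  else 0%Z.
pose f (i : 'I_s) : {ffun {ffun 'I_r -> bool} -> 'I_m'.+1} :=
  [ffun b => inord (eta (padd y0 (padd (eb b) (w i))) - 1)].
have finj : injective f.
  move=> i i' hf; case: (eqVneq i i') => // hne; exfalso.
  have [h [hhF hneq]] := hdist i i' (elimN eqP hne).
  apply: hneq.
  have [y' [hy'D [hy'G _]]] := hDfund K hK (padd h rho).
  pose e := psub (padd h rho) y'.
  pose b : {ffun 'I_r -> bool} := [ffun j => ~~ (e j =? 0)%Z].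
  have heb : eb b = e.
    apply: pt_ext => j; rewrite /eb /b ffunE.
    have [c hc] := hy'G j.
    have := hrD j; have := hy'D j; have := hF h hhF j.
    have := hq1 K j hK; have := hq2 K j hK; have := hqsum K j hK.
    rewrite /e /psub /padd in hc *.
    move=> hs1 hq2' hq1' hhj hy hr.
    have hP : Z.of_nat (p j K) = (Z.of_nat (q1 K j) + Z.of_nat (q2 K j))%Z by lia.
    rewrite hP in hc *.
    case: Z.eqb_spec => /= he; first lia.
    have hQ1 : (Z.of_nat K < Z.of_nat (q1 K j))%Z by lia.
    have hQ2 : (Z.of_nat K < Z.of_nat (q2 K j))%Z by lia.
    have : (c = 0 \/ c = 1 \/ c = -1 \/ c >= 2 \/ c <= -2)%Z by lia.
    case: Z.leb_spec => hr0; case=> [hc2|[hc2|[hc2|[hc2|hc2]]]]; nia.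
  have hW : forall i0, inGamma p K (padd e (w i0)).
    move=> i0; apply: gamma_add (hw i0); exact: hy'G.
  have eqi : forall i0, padd h (zs i0) = padd y' (padd e (w i0)).
    by move=> i0; apply: pt_ext => j; rewrite /e /w /padd /psub; lia.
  rewrite !eqi.
  case: (classic (Ucov p q1 q2 K y')) => hU.
    by rewrite !(nonhole_eta hp_dvd heta hU (hW _)).
  have hJ : Jset p q1 q2 K y' := hole_Jset hK hy'D hU.
  have hJ0 : Jset p q1 q2 K y0 by apply: epsilon_spec; exists y'.
  rewrite !(hole_eta hp_dvd hDfund hDcover hDrec heta hK hJ hJ0 (hW _)).
  rewrite -heb.
  have := congr1 (fun g : {ffun {ffun 'I_r -> bool} -> 'I_m'.+1} => nat_of_ord (g b)) hf; rewrite /f !ffunE /=.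
  have r1 := eta_range hDcover halpha heta (padd y0 (padd (eb b) (w i))).
  have r2 := eta_range hDcover halpha heta (padd y0 (padd (eb b) (w i'))).
  rewrite !inordK; lia.
have := leq_card f finj.
by rewrite card_ord !card_ffun !card_ord card_bool.
Qed.

Lemma in_In (T : eqType) (x : T) (s : seq T) : x \in s -> List.In x s.
Proof.
elim: s => //= a s IH; rewrite in_cons => /orP [/eqP ->|/IH]; [left|right] => //.
Qed.

Lemma sum_count (T : Type) (C : finType) (kap : T -> C) (L : seq T) :
  \sum_(c : C) count (fun g => kap g == c) L = size L.
Proof.
elim: L => [|a L IH] /=; first by rewrite big1.
rewrite big_split /= IH (bigD1 (kap a)) //= eqxx big1 ?addn0 //.
by move=> c hc; rewrite eq_sym (negbTE hc).
Qed.

Lemma pigeon (T : Type) (C : finType) (kap : T -> C) (L : seq T) n :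
  n * #|C| < size L -> exists c, n < count (fun g => kap g == c) L.
Proof.
move=> hL; apply: NNPP => hn.
have : size L <= \sum_(c : C) n.
  rewrite -(sum_count kap); apply: leq_sum => c _.
  by rewrite leqNgt; apply/negP => h; apply: hn; exists c.
by rewrite sum_nat_const (_ : #|xpredT| = #|C|) //; lia.
Qed.

Lemma In_filter' (T : Type) (a : pred T) (L : seq T) x :
  List.In x (filter a L) -> a x /\ List.In x L.
Proof.
elim: L => //= y L IH; case: ifP => hy /=.
  by case=> [<-|/IH [? ?]]; split => //; [left|right].
by move=> /IH [? ?]; split => //; right.
Qed.

Lemma NoDup_filter' (T : Type) (a : pred T) (L : seq T) :
  List.NoDup L -> List.NoDup (filter a L).
Proof.
elim: L => //= y L IH hN; have [hy hL] := proj1 (NoDup_cons_iff _ _) hN; case: ifP => _; last exact: IH.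
constructor; last exact: IH.
by move=> H; have [_ ?] := In_filter' H.
Qed.

Lemma In_nth' (T : Type) (d : T) (S : seq T) i :
  i < size S -> List.In (nth d S i) S.
Proof.
elim: S i => //= a S IH [|i] hi; first by left.
by right; apply: IH.
Qed.

Fixpoint idx r (S : list (pt r)) (g : pt r) : nat :=
  match S with
  | nil => 0
  | a :: S' => if excluded_middle_informative (a = g) then 0 else (idx S' g).+1
  end.

Lemma idx_nth r (d : pt r) (S : list (pt r)) i :
  List.NoDup S -> i < size S -> idx S (nth d S i) = i.
Proof.
elim: S i => //= a S IH [|i] hN hi /=; have [ha hS] := proj1 (NoDup_cons_iff _ _) hN.
  by destruct (excluded_middle_informative _).
destruct (excluded_middle_informative _) as [e|ne]; last by rewrite IH.
by exfalso; apply: ha; rewrite e; apply: In_nth'.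
Qed.

Lemma sep r s (xs : 'I_s -> config r) (L : seq ('I_s * 'I_s)) :
  exists F : list (pt r), forall i i', List.In (i, i') L -> xs i <> xs i' ->
    exists h, List.In h F /\ xs i h <> xs i' h.
Proof.
elim: L => [|[a b] L [F hF]]; first by exists nil.
case: (classic (xs a = xs b)) => hab.
  exists F => i i' /= [[<- <-] hne|hin]; [by case: hne | exact: hF].
have [h hh] : exists h, xs a h <> xs b h.
  apply: NNPP => hn; apply: hab; apply: functional_extensionality => h.
  by apply: NNPP => hh; apply: hn; exists h.
exists (h :: F) => i i' /= [[<- <-] _|hin hne].
  by exists h; split => //; left.
have [h2 [? ?]] := hF i i' hin hne; exists h2; split => //; by right.
Qed.

Lemma boundF r (F : list (pt r)) :
  exists K, 1 <= K /\ forall h, List.In h F -> forall j,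
    (- Z.of_nat K < h j < Z.of_nat K)%Z.
Proof.
elim: F => [|h F [K [hK hF]]]; first by exists 1.
pose Kh := (\max_(i : 'I_r) Z.abs_nat (h i)).+1.
exists (maxn K Kh); split; first lia.
move=> h' /= [<-|hin] j.
  have hb := @leq_bigmax _ (fun j => Z.abs_nat (h j)) j.
  have : Z.abs_nat (h j) < maxn K Kh by apply: leq_trans (leq_maxr _ _); rewrite ltnS; exact: hb.
  lia.
have := hF h' hin j; lia.
Qed.
Unset Implicit Arguments.

Lemma size_length (T : Type) (L : seq T) : size L = length L.
Proof. by elim: L => //= a L ->. Qed.

Theorem corollary4p9
  (r : nat) (hr : 2 <= r)
  (p : 'I_r -> nat -> nat)                 (* p j i = p_j^i, i >= 1 *)
  (hp_pos : forall j i, 1 <= i -> 0 < p j i)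
  (hp_inc : forall j i, 1 <= i -> p j i < p j i.+1)
  (hp_dvd : forall j i, 1 <= i -> p j i %| p j i.+1)
  (hp_big : forall j i, 1 <= i -> (2 * i).+1 < p j i)
  (hindex : forall i, 1 <= i ->
     Rgt (INR (lattice_index p i))
         (Rdiv (INR 1) (Rminus (INR 1) (Rpower (INR 2) (Ropp (pow (Rinv (INR 2)) i.+1))))))
  (q1 q2 : nat -> 'I_r -> nat)           (* q1 i j = q^i_{1,j}, q2 i j = q^i_{2,j} *)
  (hq1 : forall i j, 1 <= i -> i < q1 i j)
  (hq2 : forall i j, 1 <= i -> i < q2 i j)
  (hqsum : forall i j, 1 <= i -> q1 i j + q2 i j = p j i)
  (hDfund : forall i, 1 <= i -> forall x : pt r,
     exists y, inD q1 q2 i y /\ inGamma p i (psub x y) /\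
       forall y', inD q1 q2 i y' -> inGamma p i (psub x y') -> y' = y)
  (hD0 : forall i, 1 <= i -> inD q1 q2 i (@pzero r))
  (hDmono : forall i, 1 <= i -> forall x, inD q1 q2 i x -> inD q1 q2 i.+1 x)
  (hDcover : forall x : pt r, exists i, 1 <= i /\ inD q1 q2 i x)
  (hDrec : forall i, 2 <= i -> forall x : pt r,
     inD q1 q2 i x <->
     exists g y, inD q1 q2 i g /\ inGamma p i.-1 g /\ inD q1 q2 i.-1 y /\
                 x = padd g y)
  (m : nat) (hm : 2 <= m)
  (alpha : nat -> nat)                    (* alpha i = alpha_i, i >= 1 *)
  (halpha : forall i, 1 <= i -> 1 <= alpha i <= m /\ alpha i = i %[mod m])
  (eta : config r)
  (heta : forall k (h g : pt r), Jset p q1 q2 k h -> inGamma p k.+1 g ->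
            eta (padd g h) = alpha k.+1)
  (s : nat) (hs : m ^ (2 ^ r) < s) :
  forall xs : 'I_s -> config r, IN eta xs -> fat_diag xs.
Proof.
move=> xs [hX hIN].
apply: NNPP => hnd.
have hne : forall i i', i <> i' -> xs i <> xs i'.
  by move=> i i' hii e; apply: hnd; exists i, i'.
have [F hF0] := sep xs [seq (i, i') | i <- enum 'I_s, i' <- enum 'I_s].
have hsep : forall i i', i <> i' -> exists h, List.In h F /\ xs i h <> xs i' h.
  move=> i i' hii; apply: hF0 (hne _ _ hii); apply: in_In.
  by apply: allpairs_f; rewrite mem_enum.
have [K [hK hFK]] := boundF F.
pose U (i : 'I_s) : config r -> Prop := fun y => forall h, List.In h F -> y h = xs i h.
have hnb : forall i, nbhdX eta (xs i) (U i).
  by move=> i; exists F => y _ H.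
pose Mx := \max_(j : 'I_r) p j K.
pose kap (g : pt r) : {ffun 'I_r -> 'I_Mx.+1} :=
  [ffun j => inord (Z.to_nat (g j mod Z.of_nat (p j K)))].
have hkap : forall g g', kap g = kap g' -> inGamma p K (psub g g').
  move=> g g' e j.
  have := congr1 (fun f : {ffun 'I_r -> 'I_Mx.+1} => nat_of_ord (f j)) e.
  rewrite /kap !ffunE /=.
  have hpj := hp_pos j K hK.
  have hMx : p j K <= Mx := @leq_bigmax _ (fun j => p j K) j.
  have hP : (0 < Z.of_nat (p j K))%Z by lia.
  have b1 := Z.mod_pos_bound (g j) _ hP.
  have b2 := Z.mod_pos_bound (g' j) _ hP.
  rewrite !inordK; try lia.
  move=> hm'.
  have hmod : (g j mod Z.of_nat (p j K) = g' j mod Z.of_nat (p j K))%Z by lia.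
  exists (g j / Z.of_nat (p j K) - g' j / Z.of_nat (p j K))%Z.
  have := Z.div_mod (g j) (Z.of_nat (p j K)) ltac:(lia).
  have := Z.div_mod (g' j) (Z.of_nat (p j K)) ltac:(lia).
  rewrite /psub; nia.
have hs0 : 0 < s by lia.
have [Jl [hJnd [hJlen hJind]]] := hIN U hnb (s.-1 * #|{ffun 'I_r -> 'I_Mx.+1}|).+1.
rewrite -size_length in hJlen.
have [c hc] := pigeon kap hJlen.
pose S := filter (fun g => kap g == c) Jl.
have hsz : s <= size S by rewrite size_filter -(prednK hs0); exact: hc.
pose i0 : 'I_s := Ordinal hs0.
pose d := @pzero r.
pose t (g : pt r) : 'I_s := insubd i0 (idx S g).
have hSnd : List.NoDup S := NoDup_filter' _ hJnd.
have hSne : S <> nil by move=> e; rewrite e /= in hsz; lia.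
have hSsub : forall g, List.In g S -> List.In g Jl.
  by move=> g hg; have [] := In_filter' hg.
have [x [hxX hxU]] := hJind S t hSne hSsub.
pose W := List.flat_map (fun g => List.map (fun h => psub h g) F) S.
have [v hv] := hxX W.
pose gs (i : 'I_s) := nth d S i.
have hgsS : forall i : 'I_s, List.In (gs i) S.
  by move=> i; apply: In_nth'; apply: leq_trans (ltn_ord i) hsz.
have ht : forall i, t (gs i) = i.
  move=> i; apply: val_inj; rewrite /t val_insubd idx_nth //.
    by rewrite ltn_ord.
  by apply: leq_trans (ltn_ord i) hsz.
pose zs (i : 'I_s) : pt r := fun j => (- gs i j - v j)%Z.
have hpat : forall i h, List.In h F -> xs i h = eta (padd h (zs i)).
  move=> i h hh.
  have := hxU (gs i) (hgsS i) h hh; rewrite ht => <-.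
  rewrite /Defs.shift hv; last first.
    apply/in_flat_map; exists (gs i); split => //; exact: List.in_map.
  rewrite /Defs.shift; congr eta; apply: pt_ext => j; rewrite /psub /padd /zs; lia.
have hz : forall i, inGamma p K (psub (zs i) (zs i0)).
  move=> i.
  have [/eqP k1 _] := In_filter' (hgsS i).
  have [/eqP k2 _] := In_filter' (hgsS i0).
  have := hkap (gs i0) (gs i) (etrans k2 (esym k1)).
  apply: gamma_ext => j; rewrite /psub /zs; lia.
have hdist : forall i i', i <> i' -> exists h, List.In h F /\
       eta (padd h (zs i)) <> eta (padd h (zs i')).
  move=> i i' hii; have [h [hh hneq]] := hsep i i' hii.
  by exists h; split => //; rewrite -!hpat.
have := @key r p hp_dvd q1 q2 hq1 hq2 hqsum hDfund hDcover hDrec m (ltnW hm)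
  alpha halpha eta heta K hK F hFK s zs (zs i0) hz hdist.
lia.
Qed.
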